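(* For all $n\geq 1$ and $m\geq 2$, $s_{n,m}(122,312)=(n-1)m+1$.
   Context: $[n]_m=\{1^m,\ldots,n^m\}$; a permutation of $[n]_m$ is a sequence of length $nm$ in which each element of $[n]$ appears exactly $m$ times. A sequence avoids a pattern $\pi$ if it has no subsequence order-isomorphic to $\pi$ (same relative order and same equalities among entries). $s_{n,m}(\Pi)$ is the number of permutations of $[n]_m$ avoiding all patterns in $\Pi$. *)

(* Defs.v *)
From mathcomp Require Import all_boot.
Set Implicit Arguments. Unset Strict Implicit. Unset Printing Implicit Defensive.

Definition multiset_nm (n m : nat) : seq nat :=
  flatten [seq nseq m i | i <- iota 1 n].

(* The library's
   [permutations s] is a duplicate-free list of all rearrangements of s. *)
Definition perms_nm (n m : nat) : seq (seq nat) := permutations (multiset_nm n m).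

Definition order_iso (t p : seq nat) : bool :=
  (size t == size p) &&
  [forall i : 'I_(size t), forall j : 'I_(size t),
     ((nth 0 t i < nth 0 t j) == (nth 0 p i < nth 0 p j)) &&
     ((nth 0 t i == nth 0 t j) == (nth 0 p i == nth 0 p j))].

Definition contains (s p : seq nat) : bool :=
  [exists b : (size s).-tuple bool, order_iso (mask b s) p].

Definition avoids_all (s : seq nat) (Pi : seq (seq nat)) : bool :=
  all (fun p => ~~ contains s p) Pi.

Definition s_nm (n m : nat) (Pi : seq (seq nat)) : nat :=
  count (fun s => avoids_all s Pi) (perms_nm n m).

(* Main.v *)
Require Import Defs.
From mathcomp Require Import all_boot.
From mathcomp Require Import zify.

Lemma iso122 a b c : order_iso [:: a; b; c] [:: 1; 2; 2] = (a < b) && (b == c).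
Proof.
apply/idP/idP.
- case/andP=> _ /forallP H.
  have := H (@Ordinal 3 0 isT) => /forallP H0.
  have := H (@Ordinal 3 1 isT) => /forallP H1.
  have := H0 (@Ordinal 3 1 isT) => /= /andP[/eqP -> _].
  by have := H1 (@Ordinal 3 2 isT) => /= /andP[_ /eqP ->].
- case/andP=> ab /eqP <-; apply/andP; split=> //.
  apply/forallP=> -[[|[|[|i]]] Hi] //; apply/forallP=> -[[|[|[|j]]] Hj] //=;
  apply/andP; split; apply/eqP; lia.
Qed.

Lemma iso312 a b c : order_iso [:: a; b; c] [:: 3; 1; 2] = (b < c) && (c < a).
Proof.
apply/idP/idP.
- case/andP=> _ /forallP H.
  have := H (@Ordinal 3 0 isT) => /forallP H0.
  have := H (@Ordinal 3 1 isT) => /forallP H1.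
  have := H (@Ordinal 3 2 isT) => /forallP H2.
  have := H1 (@Ordinal 3 2 isT) => /= /andP[/eqP -> _].
  by have := H2 (@Ordinal 3 0 isT) => /= /andP[/eqP -> _].
- case/andP=> bc ca; apply/andP; split=> //.
  apply/forallP=> -[[|[|[|i]]] Hi] //; apply/forallP=> -[[|[|[|j]]] Hj] //=;
  apply/andP; split; apply/eqP; lia.
Qed.

Lemma containsP s p : reflect (exists t, subseq t s /\ order_iso t p) (contains s p).
Proof.
apply: (iffP existsP).
- by case=> b Hb; exists (mask b s); split=> //; apply: mask_subseq.
- case=> t [/subseqP [b Hb ->] Hi].
  have Hb' : size b == size s by apply/eqP.
  by exists (Tuple Hb').
Qed.

Lemma contains122 s : contains s [:: 1; 2; 2] ->
  exists a b, a < b /\ subseq [:: a; b; b] s.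
Proof.
case/containsP=> t [Hs Hi]; move: (Hi) => /andP[/eqP Hsz _].
case: t Hs Hi Hsz => [|a [|b [|c [|]]]] //= Hs; rewrite iso122 => /andP[ab /eqP bc] _.
by subst; exists a, c.
Qed.

Lemma contains312 s : contains s [:: 3; 1; 2] ->
  exists a b c, a < b < c /\ subseq [:: c; a; b] s.
Proof.
case/containsP=> t [Hs Hi]; move: (Hi) => /andP[/eqP Hsz _].
case: t Hs Hi Hsz => [|a [|b [|c [|]]]] //= Hs; rewrite iso312 => /andP[bc ca] _.
by exists b, c, a; rewrite bc ca.
Qed.

Lemma contains122I s a b : a < b -> subseq [:: a; b; b] s -> contains s [:: 1; 2; 2].
Proof. by move=> ab H; apply/containsP; exists [:: a; b; b]; rewrite iso122 ab eqxx. Qed.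

Lemma contains312I s a b c : a < b -> b < c -> subseq [:: c; a; b] s -> contains s [:: 3; 1; 2].
Proof. by move=> ab bc H; apply/containsP; exists [:: c; a; b]; rewrite iso312 ab bc. Qed.

Lemma subseq_skip (x : nat) s a b : subseq (x :: s) (a ++ b) -> x \notin a -> subseq (x :: s) b.
Proof.
elim: a => [|y a IH] //=; rewrite inE negb_or => H /andP[xy xa].
by apply: IH => //; move: H; rewrite (negbTE xy).
Qed.

Lemma subseq_del (z : nat) s a b : subseq s (a ++ z :: b) -> z \notin s -> subseq s (a ++ b).
Proof.
elim: a s => [|y a IH] [|x s] //=.
- by rewrite sub0seq.
- by move=> H; rewrite inE negb_or eq_sym => /andP[/negbTE Hx _]; move: H; rewrite Hx.
- move=> H Hz; apply: IH H _; case: eqP => _ //.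
  by move: Hz; rewrite inE negb_or => /andP[].
Qed.

Lemma sorted_geq_of (s : seq nat) : (forall x y, x < y -> ~~ subseq [:: x; y] s) -> sorted geq s.
Proof.
case: s => [|x s] // H.
elim: s x H => [|y s IH] x H //.
rewrite [sorted _ _]/= [path _ _ _]/=; apply/andP; split.
- rewrite /geq /=; case: (leqP y x) => // xy.
  by move: (H _ _ xy) => /=; rewrite !eqxx /= sub0seq.
- apply: IH => a b ab; apply/negP => Hs; move/negP: (H a b ab); apply.
  exact: (subseq_trans Hs (subseq_cons _ _)).
Qed.

Lemma count2_subseq (v : nat) s : 2 <= count (pred1 v) s -> subseq [:: v; v] s.
Proof.
elim: s => [|y s IH] //=.
case: (eqVneq y v) => [yv|yv] /=; first subst y.
- rewrite add1n ltnS => H.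
  by rewrite sub1seq -has_pred1 has_count.
- rewrite add0n => H.
  exact: IH H.
Qed.

Lemma head_struct (v : nat) t :
  (forall x, x < v -> ~~ subseq [:: x; v; v] t) -> all (fun x => x <= v) t ->
  exists j r, t = nseq j v ++ r /\ count (pred1 v) r <= 1.
Proof.
elim: t => [|x t IH] H.
- by exists 0, [::].
- move=> /= /andP[xv Ht].
  have H' : forall y, y < v -> ~~ subseq [:: y; v; v] t.
    move=> y yv; apply/negP => Hs; move/negP: (H y yv); apply.
    exact: (subseq_trans Hs (subseq_cons _ _)).
  case: (eqVneq x v) => [->|xnv].
  + have [j [r [-> Hr]]] := IH H' Ht.
    by exists j.+1, r.
  + exists 0, (x :: t); split=> //=.
    rewrite (negbTE xnv) /=; case: (leqP (count (pred1 v) t) 1) => // c2.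
    have xv' : x < v by lia.
    move: (H x xv') => /=; rewrite eqxx.
    by rewrite (count2_subseq _ _ c2).
Qed.

Definition Dp n m := flatten [seq nseq m i | i <- iota 1 n.-1].
Definition D n m := sort geq (Dp n m).

Lemma geq_total : total geq. Proof. by move=> a b; rewrite /geq /= leq_total. Qed.
Lemma geq_trans : transitive geq. Proof. by move=> a b c /= H1 H2; apply: leq_trans H2 H1. Qed.
Lemma geq_anti : antisymmetric geq. Proof. by move=> a b /= H; apply/eqP; rewrite eqn_leq andbC. Qed.

Lemma mem_ms n m x : x \in multiset_nm n m -> 0 < x <= n.
Proof.
case/flattenP=> s /mapP [i]; rewrite mem_iota => Hi -> /nseqP [-> _]; lia.
Qed.

Lemma mem_Dp n m x : x \in Dp n m -> 0 < x < n.
Proof.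
case/flattenP=> s /mapP [i]; rewrite mem_iota => Hi -> /nseqP [-> _]; lia.
Qed.

Lemma mem_D n m x : x \in D n m -> 0 < x < n.
Proof. by rewrite mem_sort; apply: mem_Dp. Qed.

Lemma size_D n m : size (D n m) = n.-1 * m.
Proof.
rewrite size_sort /Dp size_flatten /shape -map_comp.
rewrite (eq_map (g := fun _ => m)); last by move=> i /=; rewrite size_nseq.
have H : forall s : seq nat, sumn [seq m | _ <- s] = size s * m.
  by elim=> [|a s IH] //=; rewrite IH mulSn.
by rewrite H size_iota.
Qed.

Lemma sorted_D n m : sorted geq (D n m).
Proof. exact: sort_sorted geq_total _. Qed.

Lemma perm_ms n m : 0 < n -> perm_eq (multiset_nm n m) (nseq m n ++ Dp n m).
Proof.
move=> n0; rewrite /multiset_nm /Dp.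
have -> : iota 1 n = iota 1 n.-1 ++ [:: n].
  have -> : iota 1 n = iota 1 (n.-1 + 1) by rewrite addn1 prednK.
  by rewrite iotaD add1n prednK.
by rewrite map_cat flatten_cat /= cats0 perm_catC.
Qed.

Definition g n m k := nseq m.-1 n ++ (take k (D n m) ++ n :: drop k (D n m)).
Definition P122_312 := [:: [:: 1; 2; 2]; [:: 3; 1; 2]].

Lemma g_perm n m k : 0 < n -> 0 < m -> perm_eq (g n m k) (multiset_nm n m).
Proof.
move=> n0 m0; rewrite perm_sym (permPl (perm_ms n m n0)) /g.
have -> : nseq m n = nseq m.-1 n ++ [:: n] by rewrite -[[:: n]]/(nseq 1 n) -nseqD addn1 prednK.
rewrite -catA perm_cat2l.
rewrite perm_sym -cat1s.
apply: perm_trans (permEl (perm_catCA (take k (D n m)) [:: n] (drop k (D n m)))) _.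
by rewrite /= cat_take_drop perm_cons perm_sort.
Qed.

Lemma g_avoids n m k : 0 < n -> 0 < m -> avoids_all (g n m k) P122_312.
Proof.
move=> n0 m0.
have Hle : all (fun x => x <= n) (g n m k).
  apply/allP=> x; rewrite (perm_mem (g_perm n m k n0 m0)) => /mem_ms; lia.
have nD : n \notin D n m by apply/negP => /mem_D; lia.
have HD : forall x y, subseq [:: x; y] (g n m k) -> x < n -> y < n -> y <= x.
  move=> x y Hs xn yn.
  have Hs1 : subseq [:: x; y] (take k (D n m) ++ n :: drop k (D n m)).
    by apply: subseq_skip Hs _; apply/nseqP => -[]; lia.
  have {Hs1} Hs1 : subseq [:: x; y] (D n m).
    rewrite -(cat_take_drop k (D n m)); apply: subseq_del Hs1 _.
    by rewrite !inE; apply/negP => /orP [] /eqP; lia.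
  have := subseq_sorted geq_trans Hs1 (sorted_D n m).
  by rewrite /= andbT.
rewrite /avoids_all /= andbT; apply/andP; split; apply/negP.
- case/contains122 => x [y [xy Hs]].
  have yn : y <= n.
    by apply: (allP Hle); apply: (mem_subseq Hs); rewrite !inE eqxx !orbT.
  have [yn'|yn'] : y < n \/ y = n by lia.
  + have := HD x y (subseq_trans (subseq_trans (prefix_subseq [:: x; y] [:: y]) (subseq_refl _)) Hs).
    lia.
  + subst y.
    have Hs1 : subseq [:: x; n; n] (take k (D n m) ++ n :: drop k (D n m)).
      by apply: subseq_skip Hs _; apply/nseqP => -[]; lia.
    have := leq_count_subseq (pred1 n) Hs1.
    rewrite /= eqxx (ltn_eqF xy) /= count_cat /=.
    rewrite eqxx !(count_memPn _) //.
    * by apply: contra nD; apply: mem_drop.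
    * by apply: contra nD; apply: mem_take.
- case/contains312 => x [y [z [/andP [xy yz] Hs]]].
  have zn : z <= n.
    by apply: (allP Hle); apply: (mem_subseq Hs); rewrite !inE eqxx.
  have := HD x y (subseq_trans (subseq_cons _ _) Hs).
  lia.
Qed.

Lemma count_ms n m : 0 < n -> count (pred1 n) (multiset_nm n m) = m.
Proof.
move=> n0; rewrite (permP (perm_ms n m n0)) count_cat count_nseq /= eqxx mul1n.
rewrite (count_memPn _) ?addn0 //; apply/negP => /mem_Dp; lia.
Qed.

Lemma avoid_g n m t : 0 < n -> 1 < m -> perm_eq t (multiset_nm n m) ->
  avoids_all t P122_312 -> exists2 k, k <= n.-1 * m & t = g n m k.
Proof.
move=> n0 m1 Hp /andP[H1 /andP[H2 _]].
have Hle : all (fun x => x <= n) t.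
  apply/allP=> x; rewrite (perm_mem Hp) => /mem_ms; lia.
have Hct : count (pred1 n) t = m by rewrite (permP Hp) count_ms.
have [j [r [Ht Hr]]] := head_struct n t
  (fun x xn => introN idP (fun Hs => negP H1 (contains122I _ _ _ xn Hs))) Hle.
have [u [Htu Hu]] : exists u, t = nseq m.-1 n ++ u /\ count (pred1 n) u = 1.
  move: Hct; rewrite Ht count_cat count_nseq /= eqxx mul1n => Hc.
  have Hc2 : j + count (pred1 n) r = m := Hc.
  have Hr2 : count (pred1 n) r <= 1 := Hr.
  exists (nseq (j - m.-1) n ++ r); split.
    rewrite catA -nseqD subnKC //; lia.
  rewrite count_cat count_nseq /= eqxx mul1n; lia.
have nu : n \in u by rewrite -has_pred1 has_count Hu.
case/splitPr: nu Htu Hu => u1 u2 Htu Hu.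
move: Hu; rewrite count_cat /= eqxx add1n addnS => /eqP; rewrite eqSS addn_eq0.
case/andP=> /eqP/count_memPn nu1 /eqP/count_memPn nu2.
have Hsub : subseq (u1 ++ u2) (u1 ++ n :: u2).
  exact: cat_subseq (subseq_refl u1) (subseq_cons u2 n).
have Hsort : sorted geq (u1 ++ u2).
  apply: sorted_geq_of => x y xy; apply/negP => Hs.
  have yt : y \in u1 ++ u2 by apply: (mem_subseq Hs); rewrite !inE eqxx orbT.
  have yn : y < n.
    have : y <= n.
      apply: (allP Hle); rewrite Htu mem_cat; apply/orP; right.
      exact: (mem_subseq Hsub).
    have : y != n by apply/eqP => yn; move: yt; rewrite yn mem_cat (negbTE nu1) (negbTE nu2).
    lia.
  move/negP: H2; apply; apply: (contains312I _ _ _ _ xy yn).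
  rewrite Htu.
  have -> : m.-1 = m.-2.+1 by lia.
  rewrite /= eqxx.
  exact: subseq_trans Hs (subseq_trans Hsub (suffix_subseq _ _)).
have Hperm : perm_eq (u1 ++ u2) (Dp n m).
  move: Hp; rewrite Htu perm_sym (permPl (perm_ms n m n0)).
  have -> : nseq m n = nseq m.-1 n ++ [:: n] by rewrite -[[:: n]]/(nseq 1 n) -nseqD addn1 prednK //; lia.
  rewrite -catA perm_cat2l perm_sym -cat1s => H.
  by move: H; rewrite perm_catCA /= perm_cons.
have HD : u1 ++ u2 = D n m.
  rewrite -(sorted_sort geq_trans Hsort) /D.
  exact/(perm_sortP geq_total geq_trans geq_anti).
exists (size u1).
  by rewrite -size_D -HD size_cat leq_addr.
by rewrite Htu /g -HD take_size_cat // drop_size_cat.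
Qed.

Theorem theorem7 (n m : nat) :
  1 <= n -> 2 <= m ->
  s_nm n m [:: [:: 1; 2; 2]; [:: 3; 1; 2]] = (n - 1) * m + 1.
Proof.
move=> n0 m1.
have m0 : 0 < m by lia.
set L := [seq g n m k | k <- iota 0 (n.-1 * m).+1].
have uL : uniq L.
  rewrite map_inj_in_uniq ?iota_uniq // => k1 k2; rewrite !mem_iota => Hk1 Hk2 E.
  have := congr1 (fun s => index n (drop m.-1 s)) E.
  have nD : n \notin D n m by apply/negP => /mem_D; lia.
  rewrite /g /= !drop_size_cat ?size_nseq // !index_cat.
  rewrite !(negbTE (contra (@mem_take _ _ _ _) nD)) /= eqxx !addn0.
  by rewrite !size_takel // size_D; lia.
have key : forall t, (t \in filter (fun s => avoids_all s [:: [:: 1; 2; 2]; [:: 3; 1; 2]])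
                             (perms_nm n m)) = (t \in L).
  move=> t; rewrite mem_filter mem_permutations.
  apply/andP/mapP.
  - case=> Ha Hp; have [k Hk ->] := avoid_g n m t n0 m1 Hp Ha; exists k => //; rewrite mem_iota; lia.
  - by case=> k _ ->; split; [apply: g_avoids | apply: g_perm].
rewrite /s_nm -size_filter (perm_size (uniq_perm (filter_uniq _ (permutations_uniq _)) uL key)).
by rewrite size_map size_iota subn1 addn1.
Qed.
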